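(* Let $T:X\rightrightarrows X^*$ be a multivalued operator and $K\subset X$. If $T$ is pseudomonotone, then $$S(T,K)\subset S(T^\rho,K)\subset M(T,K)\quad\text{and}\quad S(T,K)\subset M(T^\rho,K)\subset M(T,K).$$ If $T$ is monotone, then moreover $$S(T,K)\subset S(T^\mu,K)\subset S(T^\rho,K)\quad\text{and}\quad M(T^\rho,K)\subset M(T^\mu,K)\subset M(T,K).$$
   Context: $X$ is a real Banach space with dual $X^*$ and pairing $\langle x,x^*\rangle=x^*(x)$. A multivalued operator $T:X\rightrightarrows X^*$ is identified with its graph $T\subset X\times X^*$; $T(x)=\{x^*:(x,x^* )\in T\}$. For $K\subset X$: $S(T,K)=\{x\in K: \exists x^*\in T(x),\ \langle y-x,x^*\rangle\ge0\ \forall y\in K\}$ and $M(T,K)=\{x\in K: \langle x-y,y^*\rangle\le0\ \forall (y,y^* )\in T \text{ with } y\in K\}$. For $(x,x^* ),(y,y^* )\in X\times X^*$, write $(x,x^* )\sim_p(y,y^* )$ if either $\min\{\langle x-y,y^*\rangle,\langle y-x,x^*\rangle\}<0$ or $\langle x-y,y^*\rangle=\langle y-x,x^*\rangle=0$. The pseudomonotone polar is $T^\rho=\{(x,x^* ): (x,x^* )\sim_p(y,y^* )\ \forall (y,y^* )\in T\}$; the monotone polar is $T^\mu=\{(x,x^* ): \langle x-y,x^*-y^*\rangle\ge0\ \forall (y,y^* )\in T\}$. $T$ is pseudomonotone if for all $(x,x^* ),(y,y^* )\in T$, $\langle y-x,x^*\rangle\ge0$ implies $\langle y-x,y^*\rangle\ge0$;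 $T$ is monotone if $\langle x-y,x^*-y^*\rangle\ge0$ for all $(x,x^* ),(y,y^* )\in T$. *)

(* Defs.v *)
From Stdlib Require Import Reals.
Open Scope R_scope.

Record BanachSpace := {
  carrier :> Type;
  vadd : carrier -> carrier -> carrier;
  vzero : carrier;
  vopp : carrier -> carrier;
  vscal : R -> carrier -> carrier;
  vnorm : carrier -> R;
  vadd_assoc : forall x y z, vadd x (vadd y z) = vadd (vadd x y) z;
  vadd_comm : forall x y, vadd x y = vadd y x;
  vadd_zero : forall x, vadd x vzero = x;
  vadd_opp : forall x, vadd x (vopp x) = vzero;
  vscal_one : forall x, vscal 1 x = x;
  vscal_assoc : forall a b x, vscal a (vscal b x) = vscal (a * b) x;
  vscal_distr_l : forall a x y, vscal a (vadd x y) = vadd (vscal a x) (vscal a y);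
  vscal_distr_r : forall a b x, vscal (a + b) x = vadd (vscal a x) (vscal b x);
  vnorm_zero : forall x, vnorm x = 0 -> x = vzero;
  vnorm_scal : forall a x, vnorm (vscal a x) = Rabs a * vnorm x;
  vnorm_triangle : forall x y, vnorm (vadd x y) <= vnorm x + vnorm y;
  vcomplete : forall u : nat -> carrier,
    (forall eps, 0 < eps -> exists N, forall m n, (N <= m)%nat -> (N <= n)%nat ->
        vnorm (vadd (u m) (vopp (u n))) < eps) ->
    exists l, forall eps, 0 < eps -> exists N, forall n, (N <= n)%nat ->
        vnorm (vadd (u n) (vopp l)) < eps
}.

Definition vsub (X : BanachSpace) (x y : X) : X := vadd X x (vopp X y).

Definition is_cont_linear (X : BanachSpace) (f : X -> R) : Prop :=
  (forall x y, f (vadd X x y) = f x + f y) /\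
  (forall a x, f (vscal X a x) = a * f x) /\
  (exists M, forall x, Rabs (f x) <= M * vnorm X x).

Definition dual (X : BanachSpace) : Type := { f : X -> R | is_cont_linear X f }.

Definition pairing (X : BanachSpace) (x : X) (xs : dual X) : R := proj1_sig xs x.

(* Multivalued operators X ⇉ X^*, identified with their graphs. *)
Definition operator (X : BanachSpace) : Type := X -> dual X -> Prop.

Definition S_set (X : BanachSpace) (T : operator X) (K : X -> Prop) : X -> Prop :=
  fun x => K x /\ exists xs, T x xs /\
           forall y, K y -> 0 <= pairing X (vsub X y x) xs.

Definition M_set (X : BanachSpace) (T : operator X) (K : X -> Prop) : X -> Prop :=
  fun x => K x /\ forall y ys, T y ys -> K y -> pairing X (vsub X x y) ys <= 0.

Definition sim_p (X : BanachSpace) (x : X) (xs : dual X) (y : X) (ys : dual X) : Prop :=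
  Rmin (pairing X (vsub X x y) ys) (pairing X (vsub X y x) xs) < 0 \/
  (pairing X (vsub X x y) ys = 0 /\ pairing X (vsub X y x) xs = 0).

Definition pm_polar (X : BanachSpace) (T : operator X) : operator X :=
  fun x xs => forall y ys, T y ys -> sim_p X x xs y ys.

Definition m_polar (X : BanachSpace) (T : operator X) : operator X :=
  fun x xs => forall y ys, T y ys ->
    0 <= pairing X (vsub X x y) xs - pairing X (vsub X x y) ys.

Definition pseudomonotone (X : BanachSpace) (T : operator X) : Prop :=
  forall x xs y ys, T x xs -> T y ys ->
    0 <= pairing X (vsub X y x) xs -> 0 <= pairing X (vsub X y x) ys.

Definition monotone (X : BanachSpace) (T : operator X) : Prop :=
  forall x xs y ys, T x xs -> T y ys ->
    0 <= pairing X (vsub X x y) xs - pairing X (vsub X x y) ys.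

Definition incl (X : BanachSpace) (A B : X -> Prop) : Prop := forall x, A x -> B x.

(* Main.v *)
Require Import Defs.
From Stdlib Require Import Reals Lra.
Open Scope R_scope.

Lemma pair_sub (X : BanachSpace) (x y : X) (s : dual X) :
  pairing X (vsub X x y) s = pairing X x s - pairing X y s.
Proof.
  destruct s as [f Hf]; unfold pairing, vsub; simpl; destruct Hf as [Hadd _].
  assert (H0 : f (vzero X) = 0).
  { pose proof (Hadd (vzero X) (vzero X)) as H. rewrite vadd_zero in H. lra. }
  assert (Ho : f (vopp X y) = - f y).
  { pose proof (Hadd y (vopp X y)) as H. rewrite vadd_opp, H0 in H. lra. }
  rewrite Hadd, Ho. lra.
Qed.

Lemma sim_intro (X : BanachSpace) x xs y ys :
  let a := pairing X (vsub X x y) ys in let b := pairing X (vsub X y x) xs in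
  (a < 0 \/ b < 0 \/ (a = 0 /\ b = 0)) -> sim_p X x xs y ys.
Proof.
  intros a b H; unfold sim_p; fold a b.
  destruct H as [H|[H|H]].
  - left. eapply Rle_lt_trans; [apply Rmin_l|exact H].
  - left. eapply Rle_lt_trans; [apply Rmin_r|exact H].
  - right; exact H.
Qed.

Lemma M_anti (X : BanachSpace) (T U : operator X) K :
  (forall y ys, T y ys -> U y ys) -> incl X (M_set X U K) (M_set X T K).
Proof. intros H x [Kx Hx]; split; auto. Qed.

Lemma S_mono (X : BanachSpace) (T U : operator X) K :
  (forall y ys, T y ys -> U y ys) -> incl X (S_set X T K) (S_set X U K).
Proof. intros H x [Kx [xs [Tx Hx]]]; split; auto. exists xs; auto. Qed.

Lemma mu_rho (X : BanachSpace) (T : operator X) :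
  forall x xs, m_polar X T x xs -> pm_polar X T x xs.
Proof.
  intros x xs H y ys Ty. apply sim_intro. specialize (H y ys Ty).
  rewrite !pair_sub in *. lra.
Qed.

Lemma T_rho (X : BanachSpace) (T : operator X) :
  pseudomonotone X T -> forall x xs, T x xs -> pm_polar X T x xs.
Proof.
  intros P x xs Tx y ys Ty. apply sim_intro.
  pose proof (P x xs y ys Tx Ty) as H1. pose proof (P y ys x xs Ty Tx) as H2.
  rewrite !pair_sub in *.
  destruct (Rlt_or_le (pairing X x ys - pairing X y ys) 0); [lra|].
  destruct (Rlt_or_le (pairing X y xs - pairing X x xs) 0); [lra|].
  right; right. split.
  - assert (0 <= pairing X y ys - pairing X x ys) by (apply H1; lra). lra.
  - assert (0 <= pairing X x xs - pairing X y xs) by (apply H2; lra). lra.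
Qed.

Lemma T_mu (X : BanachSpace) (T : operator X) :
  monotone X T -> forall x xs, T x xs -> m_polar X T x xs.
Proof. intros M x xs Tx y ys Ty. apply M; auto. Qed.

Theorem mainTheorem20 (X : BanachSpace) (T : operator X) (K : X -> Prop) :
  (pseudomonotone X T ->
     incl X (S_set X T K) (S_set X (pm_polar X T) K) /\
     incl X (S_set X (pm_polar X T) K) (M_set X T K) /\
     incl X (S_set X T K) (M_set X (pm_polar X T) K) /\
     incl X (M_set X (pm_polar X T) K) (M_set X T K)) /\
  (monotone X T ->
     incl X (S_set X T K) (S_set X (m_polar X T) K) /\
     incl X (S_set X (m_polar X T) K) (S_set X (pm_polar X T) K) /\
     incl X (M_set X (pm_polar X T) K) (M_set X (m_polar X T) K) /\
     incl X (M_set X (m_polar X T) K) (M_set X T K)).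
Proof.
  split.
  - intros P. split; [|split; [|split]].
    + apply S_mono, T_rho, P.
    + intros x [Kx [xs [Hr Hx]]]. split; auto. intros y ys Ty Ky.
      specialize (Hx y Ky). destruct (Hr y ys Ty) as [H|[H1 H2]].
      * destruct (Rle_or_lt (pairing X (vsub X x y) ys) 0); auto.
        exfalso. unfold Rmin in H. destruct Rle_dec; lra.
      * lra.
    + intros x [Kx [xs [Tx Hx]]]. split; auto. intros y ys Hr Ky.
      specialize (Hx y Ky). destruct (Hr x xs Tx) as [H|[H1 H2]].
      * destruct (Rle_or_lt (pairing X (vsub X x y) ys) 0); auto.
        exfalso. unfold Rmin in H. destruct Rle_dec; lra.
      * lra.
    + apply M_anti, T_rho, P.
  - intros M. split; [|split; [|split]].
    + apply S_mono, T_mu, M.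
    + apply S_mono, mu_rho.
    + apply M_anti, mu_rho.
    + apply M_anti, T_mu, M.
Qed.
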